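(* For every $t\le0$, the limit $\lim_{n\to\infty}\frac1n\log\mathbb{E}\big(e^{tH_n}\big)$ exists.
   Context: Standing setup (discrete-time Hawkes process, DTHP). Let $(a_i)_{i=0}^\infty$ be a sequence of strictly positive real numbers with $\sum_{i=0}^\infty a_i<1$ and $\sum_{i=1}^\infty i\,a_i<\infty$. The arrival process $\{\xi_n\}_{n\ge1}$ is a sequence of $\{0,1\}$-valued random variables on a probability space $(\Omega,\mathcal F,\mathbb P)$ with $\mathbb{P}(\xi_1=1)=a_0$, $\mathbb P(\xi_1=0)=1-a_0$, and for $n\ge2$, $$\mathbb{P}(\xi_n=1\mid \xi_1,\dots,\xi_{n-1})=a_0+\sum_{i=1}^{n-1}a_{n-i}\xi_i,\qquad \mathbb{P}(\xi_n=0\mid \xi_1,\dots,\xi_{n-1})=1-\Big(a_0+\sum_{i=1}^{n-1}a_{n-i}\xi_i\Big).$$ The DTHP is $H_n=\sum_{i=1}^n\xi_i$, and $\mathcal F_n=\sigma(\xi_1,\dots,\xi_n)$. *)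

(* Defs.v *)
From HB Require Import structures.
From mathcomp Require Import all_boot all_order all_algebra.
From mathcomp Require Import all_classical all_reals all_analysis.
Set Implicit Arguments. Unset Strict Implicit. Unset Printing Implicit Defensive.
Import Order.TTheory GRing.Theory Num.Theory.
Import numFieldNormedType.Exports.
Local Open Scope classical_set_scope.
Local Open Scope ring_scope.

(* Discrete-time Hawkes process.  Paper indexing is kept: the arrival
   variables are [xi 1], [xi 2], ...; [xi 0] is unused. *)

(* Conditional intensity of xi_{n+1} given (xi_1,...,xi_n) = (x 0,...,x (n-1)):
   a_0 + sum_{i=1}^{n} a_{n+1-i} xi_i. *)
Definition dthp_intensity (R : realType) (a : nat -> R) (n : nat)
  (x : {ffun 'I_n -> bool}) : R :=
  a 0%N + \sum_(i < n) a (n - i)%N * (x i)%:R.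

Definition dthp_hist d (T : measurableType d) (xi : nat -> T -> bool) (n : nat)
  (x : {ffun 'I_n -> bool}) : set T :=
  [set w | forall i : 'I_n, xi i.+1 w = x i].

Definition dthp_kernel (R : realType) (a : nat -> R) : Prop :=
  (forall i, 0 < a i) /\
  (\sum_(0 <= i <oo) (a i)%:E < 1)%E /\
  (\sum_(0 <= i <oo) (i%:R * a i)%:E < +oo)%E.

(* [xi] is a DTHP with kernel [a] on the probability space [P]:
   each xi_n is a measurable {0,1}-valued variable and, for every n >= 0 and
   every history x in {0,1}^n, P(xi_{n+1}=b | xi_1..xi_n = x) is given by the
   intensity (elementary conditional probability w.r.t. the finite partition
   generated by xi_1..xi_n, written multiplicatively so that null histories
   impose no constraint). *)
Definition is_DTHP d (T : measurableType d) (R : realType)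
  (P : probability T R) (a : nat -> R) (xi : nat -> T -> bool) : Prop :=
  (forall n, measurable [set w | xi n w]) /\
  (forall n (x : {ffun 'I_n -> bool}),
     P ([set w | xi n.+1 w = true] `&` dthp_hist xi x)
       = ((dthp_intensity a x)%:E * P (dthp_hist xi x))%E) /\
  (forall n (x : {ffun 'I_n -> bool}),
     P ([set w | xi n.+1 w = false] `&` dthp_hist xi x)
       = ((1 - dthp_intensity a x)%:E * P (dthp_hist xi x))%E).

Definition dthp_H d (T : measurableType d) (R : realType)
  (xi : nat -> T -> bool) (n : nat) (w : T) : R :=
  \sum_(1 <= i < n.+1) (xi i w)%:R.

(* Main.v *)
Require Import Defs.
From HB Require Import structures.
From mathcomp Require Import all_boot all_order all_algebra.
From mathcomp Require Import all_classical all_reals all_analysis.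
From mathcomp Require Import ring lra measurable_realfun.
Import Order.TTheory GRing.Theory Num.Theory.
Import numFieldNormedType.Exports.
Local Open Scope classical_set_scope.
Local Open Scope ring_scope.

Section Det.
Variables (R : realType) (a : nat -> R) (t : R).
Hypothesis apos : forall i, 0 < a i.
Hypothesis asum : forall n, \sum_(j < n) a j < 1.
Hypothesis ht : t <= 0.

Definition lam (s : seq bool) : R :=
  a 0%N + \sum_(i < size s) a (size s - i)%N * (nth false s i)%:R.

Lemma lam_cons b z : lam (b :: z) = lam z + a (size z).+1 * b%:R.
Proof.
rewrite /lam /= big_ord_recl /= subn0.
have -> : \sum_(i < size z) a ((size z).+1 - bump 0 i)%N * (nth false (b :: z) (bump 0 i))%:R
   = \sum_(i < size z) a (size z - i)%N * (nth false z i)%:R.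
  by apply: eq_bigr => i _; rewrite /bump /= add1n subSS.
lra.
Qed.

Lemma lam_bnd s : 0 <= lam s <= \sum_(j < (size s).+1) a j.
Proof.
elim: s => [|b z IH] /=.
  by rewrite /lam /= big_ord0 addr0 big_ord_recl big_ord0 addr0 (ltW (apos _)) lexx.
rewrite lam_cons big_ord_recr /=.
case/andP: IH => h1 h2; have h3 := apos (size z).+1.
case: b => /=; rewrite ?mulr1 ?mulr0; apply/andP; split; lra.
Qed.

Lemma lam01 s : 0 <= lam s /\ lam s <= 1.
Proof. case/andP: (lam_bnd s) => h1 h2; have := asum (size s).+1; split; lra. Qed.

Fixpoint V (m : nat) (s : seq bool) : R :=
  if m is m'.+1 then expR t * lam s * V m' (rcons s true)
                   + (1 - lam s) * V m' (rcons s false)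
  else 1.

Lemma V_bnd m s : expR (t * m%:R) <= V m s <= 1.
Proof.
elim: m s => [|m IH] s /=; first by rewrite mulr0 expR0 lexx.
case: (lam01 s) => l0 l1.
case/andP: (IH (rcons s true)) => a1 a2; case/andP: (IH (rcons s false)) => b1 b2.
have e1 : expR t <= 1 by rewrite expR_le1.
have e0 := expR_gt0 t.
have eS : expR (t * m.+1%:R) = expR t * expR (t * m%:R) by rewrite -expRD -natr1 mulrDr mulr1 addrC.
have e2 : expR (t * m.+1%:R) <= expR (t * m%:R).
  by rewrite eS ler_piMl // expR_ge0.
have f0 := expR_gt0 (t * m%:R).
rewrite eS in e2 *.
have L : expR t * expR (t * m%:R) <= expR t * lam s * V m (rcons s true) + (1 - lam s) * V m (rcons s false).
  have h1 : expR t * lam s * expR (t * m%:R) <= expR t * lam s * V m (rcons s true).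
    by apply: ler_wpM2l => //; apply: mulr_ge0 => //; apply: ltW.
  have h2 : (1 - lam s) * (expR t * expR (t * m%:R)) <= (1 - lam s) * V m (rcons s false).
    apply: ler_wpM2l; first lra. exact: le_trans e2 b1.
  have : expR t * expR (t * m%:R) = expR t * lam s * expR (t * m%:R) + (1 - lam s) * (expR t * expR (t * m%:R)) by ring.
  lra.
have U : expR t * lam s * V m (rcons s true) + (1 - lam s) * V m (rcons s false) <= 1.
  have g1 : expR t * lam s * V m (rcons s true) <= lam s.
    rewrite -[X in _ <= X]mulr1; apply: ler_pM => //.
    + by apply: mulr_ge0 => //; apply: ltW.
    + by apply: le_trans a1; apply: ltW.
    + rewrite -[X in _ <= X]mul1r; apply: ler_pM => //; apply: ltW.
  have g2 : (1 - lam s) * V m (rcons s false) <= 1 - lam s.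
    rewrite -[X in _ <= X]mulr1; apply: ler_wpM2l => //; lra.
  lra.
by rewrite L U.
Qed.

Definition Dom (x y : seq bool) := forall z, lam (y ++ z) <= lam (x ++ z).

Lemma lam_cat_mono x z1 z2 : lam z1 <= lam z2 -> size z1 = size z2 ->
  lam (x ++ z1) <= lam (x ++ z2).
Proof.
move=> h hs; elim: x => [|c x IH] //=.
by rewrite !lam_cons !size_cat hs lerD2r.
Qed.

Lemma Dom_nil x : Dom x [::].
Proof.
move=> z /=; elim: x => [|c x IH] /=; first by [].
rewrite lam_cons; apply: le_trans IH _; rewrite lerDl.
by apply: mulr_ge0; [apply: ltW|case: c].
Qed.

Lemma Dom_rcons x y b : Dom x y -> Dom (rcons x b) (rcons y b).
Proof. by move=> h z; rewrite !cat_rcons. Qed.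

Lemma Dom_tf x : Dom (rcons x true) (rcons x false).
Proof.
move=> z; rewrite !cat_rcons; apply: lam_cat_mono => //.
by rewrite !lam_cons lerD2l ler_wpM2l ?ler_nat // ltW.
Qed.

Lemma V_mono m : forall x y, Dom x y -> V m x <= V m y.
Proof.
elim: m => [|m IH] x y hD /=; first by [].
have hl : lam y <= lam x by have := hD [::]; rewrite !cats0.
case: (lam01 x) => lx0 lx1; case: (lam01 y) => ly0 ly1.
set A := V m (rcons x false); set B := V m (rcons x true).
set A' := V m (rcons y false); set B' := V m (rcons y true).
have hBA : B <= A by apply: IH; apply: Dom_tf.
have hAA : A <= A' by apply: IH; apply: Dom_rcons.
have hBB : B <= B' by apply: IH; apply: Dom_rcons.
have B0 : 0 <= B by case/andP: (V_bnd m (rcons x true)) => h _; apply: le_trans h; apply: expR_ge0.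
have e1 : expR t <= 1 by rewrite expR_le1.
have e0 := expR_gt0 t.
have eB : expR t * B <= B by rewrite ler_piMl.
have h1 : lam y * (A - expR t * B) <= lam x * (A - expR t * B).
  by apply: ler_wpM2r => //; lra.
have h2 : (1 - lam y) * A <= (1 - lam y) * A' by apply: ler_wpM2l => //; lra.
have h3 : lam y * (expR t * B) <= lam y * (expR t * B').
  by apply: ler_wpM2l => //; apply: ler_wpM2l => //; apply: ltW.
have q1 : expR t * lam x * B + (1 - lam x) * A = A - lam x * (A - expR t * B) by ring.
have q2 : expR t * lam y * B' + (1 - lam y) * A' = (1 - lam y) * A' + lam y * (expR t * B') by ring.
have q3 : A - lam y * (A - expR t * B) = (1 - lam y) * A + lam y * (expR t * B) by ring.
lra.
Qed.

Lemma V_sub m : forall n s, V (n + m) s <= V n s * V m [::].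
Proof.
elim => [|n IH] s; first by rewrite add0n mul1r; apply: V_mono; apply: Dom_nil.
rewrite addSn /=.
case: (lam01 s) => l0 l1.
have e0 := expR_gt0 t.
have h1 : expR t * lam s * V (n + m) (rcons s true) <= expR t * lam s * (V n (rcons s true) * V m [::]).
  by apply: ler_wpM2l; [apply: mulr_ge0 => //; apply: ltW | apply: IH].
have h2 : (1 - lam s) * V (n + m) (rcons s false) <= (1 - lam s) * (V n (rcons s false) * V m [::]).
  by apply: ler_wpM2l; [lra | apply: IH].
have q : (expR t * lam s * V n (rcons s true) + (1 - lam s) * V n (rcons s false)) * V m [::]
  = expR t * lam s * (V n (rcons s true) * V m [::]) + (1 - lam s) * (V n (rcons s false) * V m [::]) by ring.
lra.
Qed.
End Det.
Arguments lam {R}.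
Arguments V {R}.
Lemma fekete (R : realType) (u : nat -> R) (t : R) :
  (forall n m, u (n + m)%N <= u n + u m) -> (forall n, t * n%:R <= u n) ->
  (forall n, u n <= 0) ->
  exists l : R, (fun n : nat => n%:R^-1 * u n) @ \oo --> l.
Proof.
move=> hsub hlow hup.
pose S := [set x : R | exists2 n, (0 < n)%N & x = n%:R^-1 * u n].
have Slb : forall x, S x -> t <= x.
  move=> x [n n0 ->]; have n0' : (0 : R) < n%:R by rewrite ltr0n.
  by rewrite mulrC ler_pdivlMr // mulrC.
have hS : has_inf S.
  split; first by exists (1%:R^-1 * u 1%N); exists 1%N.
  by exists t => x /Slb.
have hlb : has_lbound S by case: hS.
set L := inf S.
have mult : forall k q r, u (q * k + r)%N <= q%:R * u k + u r.
  move=> k; elim => [|q IH] r; first by rewrite mul0n add0n mul0r add0r.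
  rewrite mulSn -addnA; apply: le_trans (hsub _ _) _.
  have := IH r; rewrite -natr1; lra.
exists L; apply/cvgrPdist_le => e e0.
have e20 : 0 < e / 2 by rewrite divr_gt0.
have [x [k k0 ->] hk] := inf_adherent e20 hS.
set c := L + e / 2 in hk.
have k0' : (0 : R) < k%:R by rewrite ltr0n.
have ukc : u k <= c * k%:R.
  by rewrite -ler_pdivrMr //; apply: ltW; rewrite mulrC.
pose N := maxn k (Num.truncn (k%:R * `|c| / (e / 2))).+1.
apply: filterS (nbhs_infty_ge N) => n hn.
have hkn : (k <= n)%N by apply: leq_trans hn; rewrite leq_maxl.
have n0 : (0 < n)%N by apply: leq_trans hkn.
have n0' : (0 : R) < n%:R by rewrite ltr0n.
have Sn : S (n%:R^-1 * u n) by exists n.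
have Lle := ge_inf hlb Sn.
have hN : k%:R * `|c| / (e / 2) < n%:R.
  apply: lt_le_trans (truncnS_gt _) _; rewrite ler_nat.
  by apply: leq_trans hn; rewrite leq_maxr.
rewrite ltr_pdivrMr // in hN.
have hq := mult k (n %/ k)%N (n %% k)%N.
rewrite -divn_eq in hq.
have hr := hup (n %% k)%N.
have hnr : n%:R = (n %/ k)%:R * k%:R + (n %% k)%:R :> R.
  by rewrite -natrM -natrD -divn_eq.
have hrk : (n %% k)%:R <= k%:R :> R by rewrite ler_nat ltnW // ltn_pmod.
have hqk : (n %/ k)%:R * u k <= (n %/ k)%:R * (c * k%:R).
  by apply: ler_wpM2l => //; apply: ler0n.
have hc : - c <= `|c| by rewrite -normrN ler_norm.
have h1 : (n %% k)%:R * (- c) <= (n %% k)%:R * `|c| by apply: ler_wpM2l => //; apply: ler0n.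
have h2 : (n %% k)%:R * `|c| <= k%:R * `|c| by apply: ler_wpM2r => //.
have hun : u n <= (L + e) * n%:R.
  have : (n %/ k)%:R * (c * k%:R) = c * (n%:R - (n %% k)%:R) by rewrite /c hnr; move: ((n %/ k)%:R) ((n %% k)%:R) (k%:R) (L + e / 2) => q r kk cc; ring.
  rewrite /c in hN h1 h2 hc *.
  move=> heq; rewrite heq in hqk.
  have : (L + e / 2) * (n%:R - (n %% k)%:R) = (L + e / 2) * n%:R + (n %% k)%:R * (- (L + e / 2)) by ring.
  lra.
have hv : n%:R^-1 * u n <= L + e by rewrite mulrC ler_pdivrMr.
rewrite ler_norml; apply/andP; split; lra.
Qed.

Section Meas.
Variables (d : measure_display) (T : measurableType d) (R : realType)
  (P : probability T R) (a : nat -> R) (xi : nat -> T -> bool) (t : R).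
Hypothesis hxi : is_DTHP P a xi.

Definition hist (s : seq bool) : set T :=
  [set w | forall i, (i < size s)%N -> xi i.+1 w = nth false s i].

Lemma hist_nil : hist [::] = setT.
Proof. by apply/seteqP; split => w // _ i. Qed.

Lemma hist_rcons s b : hist (rcons s b) = [set w | xi (size s).+1 w = b] `&` hist s.
Proof.
apply/seteqP; split => w /=.
- move=> h; split.
    by have := h (size s); rewrite size_rcons ltnSn nth_rcons ltnn eqxx; apply.
  move=> i hi; have := h i; rewrite size_rcons nth_rcons hi; apply; exact: ltnW.
- move=> [hb hs] i; rewrite size_rcons ltnS nth_rcons leq_eqVlt.
  case/orP => [/eqP ->|hi]; first by rewrite ltnn eqxx.
  by rewrite hi; apply: hs.
Qed.

Lemma xi_meas n b : measurable [set w | xi n w = b].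
Proof.
case: b; first exact: hxi.1.
have -> : [set w | xi n w = false] = ~` [set w | xi n w].
  by apply/seteqP; split => w /=; [move=> -> | move/negP/negbTE].
exact: measurableC (hxi.1 n).
Qed.

Lemma hist_meas s : measurable (hist s).
Proof.
elim/last_ind: s => [|s b IH]; first by rewrite hist_nil.
by rewrite hist_rcons; apply: measurableI => //; apply: xi_meas.
Qed.

Lemma P_rcons s b : P (hist (rcons s b)) =
  ((if b then lam a s else 1 - lam a s)%:E * P (hist s))%E.
Proof.
pose x : {ffun 'I_(size s) -> bool} := [ffun i : 'I_(size s) => nth false s i].
have hh : dthp_hist xi x = hist s.
  apply/seteqP; split => w /= h.
    by move=> i hi; have := h (Ordinal hi); rewrite ffunE.
  by move=> i; rewrite ffunE; apply: h.
have hl : dthp_intensity a x = lam a s.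
  by rewrite /dthp_intensity /lam; congr (_ + _); apply: eq_bigr => i _; rewrite ffunE.
rewrite hist_rcons -hh -hl; case: b.
- exact: hxi.2.1.
- exact: hxi.2.2.
Qed.

Definition G (n m : nat) (w : T) : R := \sum_(n.+1 <= i < (n + m).+1) (xi i w)%:R.

Lemma G_meas n m : measurable_fun [set: T] (EFin \o (fun w => expR (t * G n m w))).
Proof.
apply/measurable_EFinP.
have hs : measurable_fun [set: T] (G n m).
  apply: measurable_sum => i.
  have -> : (fun w => (xi i w)%:R : R) = \1_[set w | xi i w].
    apply/funext => w; rewrite indicE; case E: (xi i w).
      by rewrite mem_set.
    by rewrite memNset //= E.
  exact: measurable_indic (hxi.1 i).
apply: (measurableT_comp (f := expR) (g := fun w => t * G n m w)).
  exact: measurable_expR.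
by apply: (measurableT_comp (f := *%R t) (g := G n m)).
Qed.

Lemma G_S n m w : G n m.+1 w = (xi n.+1 w)%:R + G n.+1 m w.
Proof.
rewrite /G big_ltn; last by rewrite ltnS addnS ltnS leq_addr.
by rewrite addnS addSn.
Qed.

Lemma int_hist m : forall s,
  (\int[P]_(w in hist s) (expR (t * G (size s) m w))%:E
     = (V a t m s)%:E * P (hist s))%E.
Proof.
elim: m => [|m IH] s.
  have -> : (fun w => (expR (t * G (size s) 0 w))%:E) = cst 1%E.
    by apply/funext => w; rewrite /G addn0 big_geq // mulr0 expR0.
  rewrite integral_cst; last exact: hist_meas.
  by rewrite /= mul1e.
have hU : hist s = hist (rcons s true) `|` hist (rcons s false).
  rewrite !hist_rcons; apply/seteqP; split => w /=.
    by move=> hs; case E: (xi (size s).+1 w); [left|right].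
  by case=> -[].
have hD : [disjoint hist (rcons s true) & hist (rcons s false)].
  apply/disj_setPS => w [h1 h2].
  rewrite hist_rcons in h1; rewrite hist_rcons in h2.
  case: h1 => /= e1 _; case: h2 => /= e2 _.
  by rewrite e1 in e2.
have mf : measurable_fun (hist (rcons s true) `|` hist (rcons s false))
    (fun w => (expR (t * G (size s) m.+1 w))%:E).
  by rewrite -hU; apply: measurable_funS (G_meas _ _) => //; apply: hist_meas.
have f0 : forall w, (hist (rcons s true) `|` hist (rcons s false)) w ->
    (0 <= (expR (t * G (size s) m.+1 w))%:E)%E.
  by move=> w _; rewrite lee_fin expR_ge0.
rewrite [in LHS]hU (ge0_integral_setU P (hist_meas _) (hist_meas _) mf f0 hD).
have step b : (\int[P]_(w in hist (rcons s b)) (expR (t * G (size s) m.+1 w))%:E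
   = (expR (t * b%:R))%:E * ((V a t m (rcons s b))%:E * P (hist (rcons s b))))%E.
  rewrite -IH size_rcons.
  have mg : measurable_fun (hist (rcons s b)) (fun w => (expR (t * G (size s).+1 m w))%:E).
    by apply: measurable_funS (G_meas _ _) => //; apply: hist_meas.
  have g0 : forall w, hist (rcons s b) w -> (0 <= (expR (t * G (size s).+1 m w))%:E)%E.
    by move=> w _; rewrite lee_fin expR_ge0.
  rewrite -(ge0_integralZl_EFin P (hist_meas _) g0 mg (expR_ge0 _)).
  apply: eq_integral => w; rewrite in_setE hist_rcons => -[/= hb _].
  by rewrite G_S hb mulrDr expRD EFinM.
rewrite !step !P_rcons /=.
have hf : P (hist s) \is a fin_num by apply: fin_num_measure; apply: hist_meas.
rewrite -(fineK hf) -!EFinM -EFinD; congr EFin.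
rewrite mulr1 mulr0 expR0; ring.
Qed.

End Meas.

Theorem lemma4p6 (d : measure_display) (T : measurableType d) (R : realType)
  (P : probability T R) (a : nat -> R) (xi : nat -> T -> bool)
  (ha : dthp_kernel a) (hxi : is_DTHP P a xi) (t : R) (ht : t <= 0) :
  exists l : R,
    (fun n : nat =>
       n%:R^-1 * ln (fine (\int[P]_w (expR (t * dthp_H R xi n w))%:E)))
      @ \oo --> l.
Proof.
case: ha => apos [hs1 hs2].
have asum : forall n, \sum_(j < n) a j < 1.
  move=> n.
  have h : (\sum_(0 <= i < n) (a i)%:E <= \sum_(0 <= i <oo) (a i)%:E)%E.
    by apply: nneseries_lim_ge => i _ _; rewrite lee_fin ltW.
  by have := le_lt_trans h hs1; rewrite sumEFin lte_fin big_mkord.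
have E n : (\int[P]_w (expR (t * dthp_H R xi n w))%:E = (V a t n [::])%:E)%E.
  have := @int_hist _ _ _ P a xi t hxi n [::].
  by rewrite hist_nil probability_setT mule1.
have -> : (fun n : nat =>
       n%:R^-1 * ln (fine (\int[P]_w (expR (t * dthp_H R xi n w))%:E)))
   = (fun n => n%:R^-1 * ln (V a t n [::])).
  by apply/funext => n; rewrite E.
have Vpos n : V a t n [::] \is Num.pos.
  case/andP: (@V_bnd R a t apos asum ht n [::]) => h _.
  by rewrite posrE; apply: lt_le_trans h; apply: expR_gt0.
apply: (@fekete R _ t).
- move=> n m; rewrite -lnM ?Vpos // ler_ln ?posrE ?mulr_gt0 -?posrE ?Vpos //.
  exact: V_sub.
- move=> n; case/andP: (@V_bnd R a t apos asum ht n [::]) => h _.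
  by rewrite -[X in X <= _]expRK ler_ln ?posrE ?expR_gt0 -?posrE ?Vpos.
- move=> n; case/andP: (@V_bnd R a t apos asum ht n [::]) => _ h.
  by rewrite -ln1 ler_ln ?posrE ?ltr01 -?posrE ?Vpos.
Qed.
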